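(* Let $G=(V,E,w)$ be an undirected graph without self-loops, with $n\ge 2$ vertices, positive edge weights and conductance $\Phi_G$. Then every optimal HC tree $\mathcal{T}^*$ of $G$ (equivalently, $\mathsf{OPT}_G$) satisfies \[ \mathrm{cost}_G(\mathcal{T}^* ) \ge \frac{2\Phi_G}{9}\cdot \max\left\{\frac{\mathrm{vol}(G)^2}{d_{\max}},\; d_{\min}\cdot n^2\right\} = \frac{2\Phi_G}{9}\cdot n\cdot \mathrm{vol}(G)\cdot \max\left\{\frac{d_{\mathrm{avg}}}{d_{\max}},\frac{d_{\min}}{d_{\mathrm{avg}}}\right\}. \]
   Context: $d_u=\sum_{v} w_{uv}$; $d_{\min},d_{\max}$ are the minimum and maximum degree, and $d_{\mathrm{avg}}=\sum_u d_u/n$. $\mathrm{vol}(S)=\sum_{u\in S}d_u$, $\mathrm{vol}(G)=\mathrm{vol}(V)$. For $S\subseteq V$, $w(S,T)$ is the total weight of edges between $S$ and $T$; the conductance of nonempty $S$ is $\Phi_G(S)=w(S,V\setminus S)/\mathrm{vol}(S)$, and $\Phi_G=\min\{\Phi_G(S): \emptyset\ne S\subset V,\ \mathrm{vol}(S)\le \mathrm{vol}(V)/2\}$. An HC tree of $G$ is a rooted binary tree whose leaves are in bijection with $V$; internal nodes are identified with the vertex sets of their leaves; $u\vee v$ is the lowest common ancestor. $\mathrm{cost}_G(\mathcal{T})=\sum_{\{u,v\}\in E}w_{uv}|\mathsf{leaves}(\mathcal{T}[u\vee v])|$, and $\mathsf{OPT}_G=\min_{\mathcal{T}}\mathrm{cost}_G(\mathcal{T})$.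 *)

(* Defs.v *)
From HB Require Import structures.
From mathcomp Require Import all_boot all_order all_algebra.
Set Implicit Arguments. Unset Strict Implicit. Unset Printing Implicit Defensive.
Import Order.TTheory GRing.Theory Num.Theory.
Local Open Scope ring_scope.

(* A weighted undirected graph on a finite vertex type V is given by a
   weight function w : V -> V -> R; {u,v} is an edge iff w u v > 0. *)

Section Graph.
Variables (R : realFieldType) (V : finType) (w : V -> V -> R).

Definition wgraph : Prop :=
  [/\ forall u v, w u v = w v u,
      forall u, w u u = 0
    & forall u v, 0 <= w u v].

Definition deg (u : V) : R := \sum_(v : V) w u v.
Definition vol (S : {set V}) : R := \sum_(u in S) deg u.
Definition volG : R := vol [set: V].
Definition wcut (S T : {set V}) : R := \sum_(u in S) \sum_(v in T) w u v.

(* d_max (degrees are nonnegative, so 0 is a harmless unit) *)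
Definition dmax : R := \big[Order.max/0]_(u : V) deg u.
(* d_min (dmax bounds all degrees, so it is a harmless unit) *)
Definition dmin : R := \big[Order.min/dmax]_(u : V) deg u.
Definition davg : R := volG / #|V|%:R.

Definition cond_set (S : {set V}) : R := wcut S (~: S) / vol S.
Definition admissible (S : {set V}) : bool :=
  [&& S != set0, S != [set: V] & vol S <= volG / 2].
(* Phi_G = min over admissible S of cond_set S; every cond_set S <= 1 and the
   admissible family is nonempty for n >= 2, so 1 is a harmless unit. *)
Definition conductance : R := \big[Order.min/1]_(S | admissible S) cond_set S.

End Graph.

Inductive hctree (T : Type) := Leaf of T | Node of hctree T & hctree T.
Arguments Leaf {T}. Arguments Node {T}.

Fixpoint leaves (T : Type) (t : hctree T) : seq T :=
  match t with Leaf x => [:: x] | Node l r => leaves l ++ leaves r end.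

Definition is_hctree (V : finType) (t : hctree V) : bool :=
  perm_eq (leaves t) (enum V).

(* |leaves(T[u \/ v])|: number of leaves below the lowest common ancestor *)
Fixpoint lca_size (V : eqType) (t : hctree V) (u v : V) : nat :=
  match t with
  | Leaf _ => 1
  | Node l r =>
      if (u \in leaves l) && (v \in leaves l) then lca_size l u v
      else if (u \in leaves r) && (v \in leaves r) then lca_size r u v
      else size (leaves l) + size (leaves r)
  end%N.

(* cost_G(T) = sum over edges {u,v} of w_uv |leaves(T[u \/ v])|;
   each unordered pair is counted twice in the double sum (w u u = 0). *)
Definition hc_cost (R : realFieldType) (V : finType) (w : V -> V -> R)
  (t : hctree V) : R :=
  2^-1 * \sum_(u : V) \sum_(v : V) w u v * (lca_size t u v)%:R.

(* Main.v *)
Require Import Defs.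
From HB Require Import structures.
From mathcomp Require Import all_boot all_order all_algebra.
From mathcomp Require Import zify ring lra.
Import Order.TTheory GRing.Theory Num.Theory.
Local Open Scope ring_scope.


Fixpoint clu {V : eqType} (k : nat) (u : V) (t : hctree V) : seq V :=
  match t with
  | Leaf x => [:: x]
  | Node l r => if (size (leaves l ++ leaves r) <= k)%N then leaves l ++ leaves r
                else if u \in leaves l then clu k u l else clu k u r
  end.

Lemma leaves_gt0 {V : Type} (t : hctree V) : (0 < size (leaves t))%N.
Proof. elim: t => [x|l IHl r IHr] //=; rewrite size_cat; lia. Qed.

Lemma lca_ge1 (V : eqType) (t : hctree V) u v : (1 <= lca_size t u v)%N.
Proof.
elim: t => [x|l IHl r IHr] //=.
case: ifP => _ //; case: ifP => _ //.
have := leaves_gt0 l; lia.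
Qed.

Lemma lemA (V : eqType) k (t : hctree V) u v :
  uniq (leaves t) -> u \in leaves t -> v \in leaves t -> v \notin clu k u t ->
  (k < lca_size t u v)%N.
Proof.
elim: t => [x|l IHl r IHr] /=.
  by move=> _ _ ->.
rewrite cat_uniq => /and3P [ul dis ur] hu hv.
case: ifP => hs; first by rewrite hv.
have hs' : (k < size (leaves l) + size (leaves r))%N by rewrite -size_cat ltnNge hs.
have disj : forall x, x \in leaves l -> x \in leaves r -> False.
  move=> x xl xr; move/hasPn: dis => /(_ x xr) /=; by rewrite xl.
case: ifP => hul.
  case: ifP => hvl; first exact: IHl.
  have -> : (u \in leaves r) = false by apply/negP => /(disj _ hul).
  by [].
have hur : u \in leaves r by move: hu; rewrite mem_cat hul.
rewrite hur /=.
case: ifP => hvr /=; last by [].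
by move=> hn; apply: IHr => //; move: hv; rewrite mem_cat hvr orbF.
Qed.

Lemma count_le K s : (\sum_(1 <= k < K.+1) (k < s) = minn K s.-1)%N.
Proof.
elim: K => [|K IH]; first by rewrite big_nil; lia.
rewrite big_nat_recr //= IH; lia.
Qed.


Section B.
Variables (R : realFieldType) (V : finType) (w : V -> V -> R) (m : V -> R) (Phi : R) (k : nat).
Hypothesis k0 : (0 < k)%N.
Hypothesis H : forall S : {set V}, S != set0 -> (#|S| <= k)%N ->
  Phi * \sum_(u in S) m u <= \sum_(u in S) \sum_(v in ~: S) w u v.

Lemma smallc (s : seq V) : uniq s -> (0 < size s <= k)%N ->
  Phi * \sum_(u <- s) m u <= \sum_(u <- s) \sum_(v : V) w u v * (v \notin s)%:R.
Proof.
move=> us /andP [s0 sk].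
have [x0 x0s] : exists x, x \in s.
  by case: s us s0 sk => // x s _ _ _; exists x; rewrite mem_head.
pose S := [set x | x \in s].
have HS := H S.
rewrite !big_uniq //.
have e1 : \sum_(u in s) m u = \sum_(u in S) m u by apply: eq_bigl => x; rewrite inE.
have e2 : \sum_(u in s) \sum_(v : V) w u v * (v \notin s)%:R = \sum_(u in S) \sum_(v in ~: S) w u v.
  apply: eq_big => [x|u _]; first by rewrite inE.
  rewrite [RHS]big_mkcond; apply: eq_bigr => v _.
  by rewrite !inE; case: (v \in s); rewrite ?mulr0 ?mulr1.
rewrite e1 e2; apply: HS.
  by apply/set0Pn; exists x0; rewrite !inE.
by rewrite cardsE; move/card_uniqP: us => ->.
Qed.

Lemma lemB t : uniq (leaves t) ->
  Phi * \sum_(u <- leaves t) m u <= \sum_(u <- leaves t) \sum_(v : V) w u v * (v \notin clu k u t)%:R.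
Proof.
elim: t => [x|l IHl r IHr] /=.
  by move=> _; apply: (smallc [:: x]); rewrite //= k0.
move=> uc; case hs: (size (leaves l ++ leaves r) <= k)%N.
  by apply: smallc => //; rewrite hs andbT size_cat addn_gt0 leaves_gt0.
move: (uc); rewrite cat_uniq => /and3P [ul dis ur].
rewrite !big_cat /= mulrDr; apply: lerD.
  apply: (le_trans (IHl ul)); rewrite le_eqVlt; apply/orP; left; apply/eqP.
  by apply: eq_big_seq => u ul'; rewrite ul'.
apply: (le_trans (IHr ur)); rewrite le_eqVlt; apply/orP; left; apply/eqP.
apply: eq_big_seq => u ur'; have -> // : (u \in leaves l) = false.
by apply/negP => ul'; move/hasPn: dis => /(_ u ur') /=; rewrite ul'.
Qed.
End B.


Lemma lemD (R : realFieldType) (V : finType) (w : V -> V -> R) (m : V -> R) (Phi : R)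
  (t : hctree V) (K : nat) :
  perm_eq (leaves t) (enum V) -> (forall u v, 0 <= w u v) -> (forall u, w u u = 0) ->
  (forall k, (0 < k)%N -> (k <= K)%N -> forall S : {set V}, S != set0 -> (#|S| <= k)%N ->
     Phi * \sum_(u in S) m u <= \sum_(u in S) \sum_(v in ~: S) w u v) ->
  \sum_u \sum_v w u v + K%:R * (Phi * \sum_u m u) <=
  \sum_u \sum_v w u v * (lca_size t u v)%:R.
Proof.
move=> pt w0 wuu HK.
have ut : uniq (leaves t) by rewrite (perm_uniq pt) enum_uniq.
have memt : forall x, x \in leaves t by move=> x; rewrite (perm_mem pt) mem_enum.
have eqs : forall F : V -> R, \sum_(u <- leaves t) F u = \sum_u F u.
  by move=> F; rewrite big_uniq //; apply: eq_bigl => x; rewrite memt.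
pose X k u v : R := (v \notin clu k u t)%:R.
apply: (@le_trans _ _ (\sum_u \sum_v w u v * (1 + \sum_(1 <= k < K.+1) X k u v))).
  have -> : \sum_u \sum_v w u v * (1 + \sum_(1 <= k < K.+1) X k u v) =
    \sum_u \sum_v w u v + \sum_u \sum_v \sum_(1 <= k < K.+1) w u v * X k u v.
    rewrite -big_split /=; apply: eq_bigr => u _.
    rewrite -big_split /=; apply: eq_bigr => v _.
    by rewrite mulrDr mulr1 mulr_sumr.
  rewrite lerD2l.
  have -> : \sum_u \sum_v \sum_(1 <= k < K.+1) w u v * X k u v =
      \sum_(1 <= k < K.+1) \sum_u \sum_v w u v * X k u v.
    rewrite (eq_bigr (fun u => \sum_(1 <= k < K.+1) \sum_v w u v * X k u v)).
      by rewrite exchange_big.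
    by move=> u _; rewrite exchange_big.
  apply: (@le_trans _ _ (\sum_(1 <= k < K.+1) (Phi * \sum_u m u))).
    by rewrite sumr_const_nat subn1 /= mulr_natl.
  apply: ler_sum_nat => k /andP [k1 kK].
  rewrite -eqs -eqs.
  apply: lemB => //.
  by move=> S; apply: HK.
apply: ler_sum => u _; apply: ler_sum => v _.
case: (eqVneq u v) => [->|uv]; first by rewrite wuu !mul0r.
apply: ler_wpM2l => //.
have h : (1 + \sum_(1 <= k < K.+1) (v \notin clu k u t) <= lca_size t u v)%N.
  apply: (@leq_trans (1 + \sum_(1 <= k < K.+1) (k < lca_size t u v))).
    rewrite leq_add2l; apply: leq_sum => k _.
    case: (boolP (v \notin clu k u t)) => //= hv.
    by rewrite (@lemA _ k t u v ut (memt u) (memt v) hv).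
  rewrite count_le; have := @lca_ge1 _ t u v; lia.
move: h; rewrite -(ler_nat R) natrD natr_sum.
by [].
Qed.

Set Implicit Arguments. Unset Strict Implicit.

Section G.
Variables (R : realFieldType) (V : finType) (w : V -> V -> R).
Hypothesis hw : wgraph w.

Lemma w0 u v : 0 <= w u v. Proof. by case: hw. Qed.
Lemma wsym u v : w u v = w v u. Proof. by case: hw. Qed.
Lemma wuu u : w u u = 0. Proof. by case: hw. Qed.

Lemma deg0 u : 0 <= deg w u. Proof. by apply: sumr_ge0 => v _; apply: w0. Qed.
Lemma degmax u : deg w u <= dmax w. Proof. exact: le_bigmax. Qed.
Lemma dmax0 : 0 <= dmax w.
Proof.
apply: (big_ind (fun x => 0 <= x)) => //; first by move=> x y hx hy; rewrite le_max hx.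
by move=> u _; apply: deg0.
Qed.
Lemma dminle u : dmin w <= deg w u. Proof. exact: bigmin_le. Qed.
Lemma dmin0 : 0 <= dmin w.
Proof.
apply: (big_ind (fun x => 0 <= x)); first exact: dmax0.
  by move=> x y hx hy; rewrite le_min hx hy.
by move=> u _; apply: deg0.
Qed.

Lemma cut0 S T : 0 <= wcut w S T.
Proof. by apply: sumr_ge0 => u _; apply: sumr_ge0 => v _; apply: w0. Qed.
Lemma vol0 S : 0 <= vol w S.
Proof. by apply: sumr_ge0 => u _; apply: deg0. Qed.
Lemma cut_le S T : wcut w S T <= vol w S.
Proof.
apply: ler_sum => u _; rewrite /deg [X in _ <= X](bigID (mem T)) /= lerDl.
by apply: sumr_ge0 => v _; apply: w0.
Qed.

Lemma cond01 S : 0 <= cond_set w S <= 1.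
Proof.
rewrite /cond_set divr_ge0 ?cut0 ?vol0 //=.
have [->|nz] := eqVneq (vol w S) 0; first by rewrite invr0 mulr0.
have vp : 0 < vol w S by rewrite lt0r nz vol0.
by rewrite ler_pdivrMr // mul1r cut_le.
Qed.

Lemma Phi01 : 0 <= conductance w <= 1.
Proof.
apply: (big_ind (fun x => 0 <= x <= 1)); first by rewrite ler01 lexx.
  move=> x y /andP [hx1 hx2] /andP [hy1 hy2].
  by rewrite le_min hx1 hy1 ge_min hx2.
by move=> S _; apply: cond01.
Qed.

Lemma volT : vol w [set: V] = \sum_u \sum_v w u v.
Proof. by rewrite /vol /deg; apply: eq_bigl => x; rewrite inE. Qed.

Lemma volC S : vol w S + vol w (~: S) = volG w.
Proof. by rewrite /volG /vol [in RHS](big_setID S) setTI setTD. Qed.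

Lemma cutC S : wcut w (~: S) (~: ~: S) = wcut w S (~: S).
Proof.
rewrite setCK /wcut exchange_big; apply: eq_bigr => u _; apply: eq_bigr => v _.
exact: wsym.
Qed.

Lemma lemC S : vol w S <= volG w / 2 ->
  conductance w * vol w S <= wcut w S (~: S).
Proof.
move=> hS.
have [Phi0 Phi1] := andP Phi01.
have [->|nz] := eqVneq (vol w S) 0; first by rewrite mulr0 cut0.
have vp : 0 < vol w S by rewrite lt0r nz vol0.
have adm : admissible w S.
  rewrite /admissible hS andbT; apply/andP; split.
    by apply: contra nz => /eqP ->; rewrite /vol big_set0.
  apply: contra_neq nz => eS; move: hS; rewrite eS /volG => hS.
  have := vol0 [set: V] => h.
  lra.
have := bigmin_le_cond 1 (cond_set w) adm; rewrite -/(conductance w) /cond_set => h.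
by rewrite -ler_pdivlMr.
Qed.

Lemma volS_le (S : {set V}) : vol w S <= #|S|%:R * dmax w.
Proof.
apply: (@le_trans _ _ (\sum_(u in S) dmax w)); first by apply: ler_sum => u _; apply: degmax.
by rewrite sumr_const mulr_natl.
Qed.

Lemma volS_ge (S : {set V}) : #|S|%:R * dmin w <= vol w S.
Proof.
apply: (@le_trans _ _ (\sum_(u in S) dmin w)); last by apply: ler_sum => u _; apply: dminle.
by rewrite sumr_const mulr_natl.
Qed.

End G.


Unset Implicit Arguments. Set Strict Implicit.


Lemma lemE (R : realFieldType) (Phi vol M B X : R) (K : nat) :
  0 <= Phi -> Phi <= 1 -> 0 <= M -> M <= vol -> vol + K%:R * (Phi * M) <= X ->
  B <= 2 * (K%:R + 1) * M -> 2 * Phi / 9 * B <= 2^-1 * X.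
Proof.
move=> P0 P1 M0 Mv hX hB.
have c0 : 0 <= 2 * Phi / 9 by rewrite divr_ge0 // mulr_ge0.
apply: (le_trans (ler_wpM2l c0 hB)).
have K0 : 0 <= (K%:R : R) by [].
have PM : Phi * M <= M by nra.
have Q0 : 0 <= K%:R * (Phi * M) by rewrite mulr_ge0 // mulr_ge0.
have -> : 2 * Phi / 9 * (2 * (K%:R + 1) * M) = 4 / 9 * (K%:R * (Phi * M) + Phi * M) by ring.
lra.
Qed.


Theorem lemma3p2 (R : realFieldType) (V : finType) (w : V -> V -> R)
  (Tstar : hctree V) :
  wgraph w -> (2 <= #|V|)%N ->
  is_hctree Tstar ->
  (forall T : hctree V, is_hctree T -> hc_cost w Tstar <= hc_cost w T) ->
  hc_cost w Tstar >=
    (2 * conductance w / 9) *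
      Num.max (volG w ^+ 2 / dmax w) (dmin w * (#|V|%:R) ^+ 2)
  /\
  (2 * conductance w / 9) *
      Num.max (volG w ^+ 2 / dmax w) (dmin w * (#|V|%:R) ^+ 2)
  = (2 * conductance w / 9) * #|V|%:R * volG w *
      Num.max (davg w / dmax w) (dmin w / davg w).
Proof.
move=> hw n2 hT _.
have [Phi0 Phi1] := andP (Phi01 hw).
have pt : perm_eq (leaves Tstar) (enum V) := hT.
have volE : volG w = \sum_u \sum_v w u v := volT w.
have degE : \sum_u deg w u = volG w by rewrite volE.
have volGn : volG w <= #|V|%:R * dmax w by have := volS_le w [set: V]; rewrite cardsT.
have volGm : #|V|%:R * dmin w <= volG w by have := volS_ge w [set: V]; rewrite cardsT.
have dmax0 := dmax0 hw.
have dmin0 := dmin0 hw.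
have vG0 : 0 <= volG w := vol0 hw _.
have c0 : 0 <= 2 * conductance w / 9 by rewrite divr_ge0 // mulr_ge0.
split.
  rewrite /hc_cost (maxr_pMr _ _ c0) ge_max; apply/andP; split.
    pose P k := (k <= #|V|)%N && (k%:R * dmax w <= volG w / 2).
    have exP : exists k, P k by exists 0%N; rewrite /P leq0n mul0r divr_ge0.
    have ubP : forall k, P k -> (k <= #|V|)%N by move=> k /andP[].
    case: (ex_maxnP exP ubP) => K /andP [Kn KV] Kmax.
    have hK : volG w <= 2 * (K%:R + 1) * dmax w.
      case: (ltnP K #|V|) => Kn'.
        have : ~~ P K.+1 by apply/negP => /Kmax; rewrite ltnn.
        have e : (K.+1%:R : R) = K%:R + 1 by rewrite -addn1 natrD.
        rewrite /P Kn' /= -ltNge e => h; lra.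
      have Ke : K = #|V| by apply/eqP; rewrite eqn_leq Kn Kn'.
      subst K; nra.
    apply: (@lemE _ _ _ _ _ _ K Phi0 Phi1 vG0 (lexx _)).
      have := @lemD _ _ w (deg w) (conductance w) Tstar K pt (w0 hw) (wuu hw).
      rewrite degE; apply.
      move=> k k0 kK S S0 Sk; apply: lemC => //.
      apply: (le_trans (volS_le w S)); apply: (le_trans _ KV).
      by apply: (ler_wpM2r dmax0); rewrite ler_nat; exact: (leq_trans Sk kK).
    have [->|nz] := eqVneq (dmax w) 0; first by rewrite invr0 mulr0 !mulr_ge0 ?addr_ge0.
    have dp : 0 < dmax w by rewrite lt0r nz dmax0.
    rewrite ler_pdivrMr //; nra.
  have cs : forall (A : {set V}), \sum_(u in A) dmin w = #|A|%:R * dmin w.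
    by move=> A; rewrite sumr_const mulr_natl.
  have cV : \sum_(u : V) dmin w = #|V|%:R * dmin w.
    by rewrite sumr_const mulr_natl.
  have nK : (#|V|%:R : R) <= 2 * ((#|V|./2)%:R + 1).
    have : (#|V| <= 2 * (#|V|./2 + 1))%N.
      have := odd_double_half #|V|; rewrite -muln2; have := leq_b1 (odd #|V|); lia.
    rewrite -(ler_nat R) natrM natrD => h; exact: h.
  apply: (@lemE _ _ _ (#|V|%:R * dmin w) _ _ (#|V|./2) Phi0 Phi1 _ volGm).
  - by rewrite mulr_ge0.
  - have := @lemD _ _ w (fun _ => dmin w) (conductance w) Tstar (#|V|./2) pt (w0 hw) (wuu hw).
    rewrite cV -volE; apply.
    move=> k k0 kK S S0 Sk; rewrite cs.
    have Sn : (#|S|.*2 <= #|V|)%N.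
      by rewrite -geq_half_double; exact: (leq_trans Sk kK).
    have hc := cardsC S.
    have SC : (#|S|%:R : R) <= #|~: S|%:R by rewrite ler_nat; lia.
    have := volC w S => hvC.
    case: (lerP (vol w S) (volG w / 2)) => hS.
      apply: (le_trans _ (lemC hw hS)); apply: ler_wpM2l => //; exact: volS_ge.
    have hS' : vol w (~: S) <= volG w / 2 by lra.
    rewrite -[X in _ <= X]/(wcut w S (~: S)) -(cutC hw S); apply: (le_trans _ (lemC hw hS')); apply: ler_wpM2l => //.
    apply: (le_trans _ (volS_ge w _)); exact: ler_wpM2r.
  - have h := ler_wpM2l (mulr_ge0 (ler0n R #|V|) dmin0) nK; nra.
have n0 : (0 < #|V|%:R :> R) by rewrite ltr0n; lia.
have [v0|vnz] := eqVneq (volG w) 0.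
  have dm0 : dmin w = 0.
    apply/eqP; rewrite eq_le dmin0 andbT.
    rewrite v0 in volGm; rewrite pmulr_rle0 // in volGm.
  rewrite /davg v0 dm0 !(mul0r, mulr0, expr0n) /=.
  by rewrite maxxx mulr0.
have vp : 0 < volG w by rewrite lt0r vnz.
have nz : (#|V|%:R : R) != 0 by apply: lt0r_neq0.
have e1 : #|V|%:R * volG w * (davg w / dmax w) = volG w ^+ 2 / dmax w.
  rewrite /davg; field; rewrite nz andbT.
  apply/eqP => d0; rewrite d0 mulr0 in volGn; lra.
have e2 : #|V|%:R * volG w * (dmin w / davg w) = dmin w * #|V|%:R ^+ 2.
  by rewrite /davg; field; rewrite vnz nz.
have E : #|V|%:R * volG w * Num.max (davg w / dmax w) (dmin w / davg w) =
    Num.max (volG w ^+ 2 / dmax w) (dmin w * #|V|%:R ^+ 2).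
  by rewrite maxr_pMr ?mulr_ge0 // e1 e2.
by rewrite -E !mulrA.
Qed.
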